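(* Let $N\ge2$, $R>0$, let $g:[0,R]\to(0,\infty)$ be smooth, let $A,B,p,q$ be positive constants with $A\neq B$, and let $\kappa\in(0,1)$, all independent of $\epsilon$. For $\epsilon>0$ let $U_\epsilon\in C^1([0,R])\cap C^\infty((0,R))$ be the unique solution of problem (N* ) described in the context, and set $I_p=\int_0^R s^{N-1}e^{pU_\epsilon(s)}ds$, $I_q=\int_0^R s^{N-1}e^{-qU_\epsilon(s)}ds$, $$\Lambda_{1,\epsilon}(R)=\frac{\epsilon^2}{2}\int_0^R\frac{(N-2)g(s)+sg'(s)}{R^N}s^{N-1}U_\epsilon'(s)^2ds,$$ $$\Lambda_{2,\epsilon}(R)=-\frac{\epsilon^2}{2}g(\epsilon^\kappa)U_\epsilon'(\epsilon^\kappa)^2+\frac{\epsilon^2}{2}\int_{\epsilon^\kappa}^R\frac{2(N-1)g(s)+sg'(s)}{s}U_\epsilon'(s)^2ds.$$ Then $$\frac{R^N}{N}\Big(\frac{Ae^{pU_\epsilon(R)}}{pI_p}+\frac{Be^{-qU_\epsilon(R)}}{qI_q}\Big)=\frac{R^2(A-B)^2}{2N^2\epsilon^2g(R)}+\frac Ap+\frac Bq+\Lambda_{1,\epsilon}(R),$$ and $$\frac{R^N}{N}\Big(\frac{Ae^{pU_\epsilon(\epsilon^\kappa)}}{pI_p}+\frac{Be^{-qU_\epsilon(\epsilon^\kappa)}}{qI_q}\Big)=\frac Ap+\frac Bq+\Lambda_{1,\epsilon}(R)-\Lambda_{2,\epsilon}(R).$$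
   Context: Problem (N* ): for $\epsilon>0$, find $U_\epsilon\in C^1([0,R])\cap C^\infty((0,R))$ such that for $r\in(0,R)$ $$\epsilon^2 g(r)\Big[U_\epsilon''(r)+\Big(\frac{N-1}{r}+\frac{g'(r)}{g(r)}\Big)U_\epsilon'(r)\Big]=\frac{R^N}{N}\Big(\frac{Ae^{pU_\epsilon(r)}}{\int_0^R s^{N-1}e^{pU_\epsilon(s)}ds}-\frac{Be^{-qU_\epsilon(r)}}{\int_0^R s^{N-1}e^{-qU_\epsilon(s)}ds}\Big),$$ together with $\int_0^R s^{N-1}U_\epsilon(s)\,ds=0$, $U_\epsilon'(0)=0$ and $U_\epsilon'(R)=\frac{R(A-B)}{\epsilon^2Ng(R)}$; it has a unique solution. Integrals $\int_a^b$ with $a>b$ are understood as $-\int_b^a$. *)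

(* Defs.v *)
From Stdlib Require Import Reals Lra.
From Coquelicot Require Import Coquelicot.
Open Scope R_scope.

(* g is smooth on [0,Rr]: it is C^infinity on an open interval containing [0,Rr]
   (equivalent, by Whitney/Seeley extension, to smoothness up to the boundary). *)
Definition smooth_on_closed (g : R -> R) (Rr : R) : Prop :=
  exists delta : R, 0 < delta /\
    forall (n : nat) (x : R), -delta < x < Rr + delta -> ex_derive_n g n x.

Definition C1_closed_with_deriv (U Up : R -> R) (Rr : R) : Prop :=
  (forall x, 0 <= x <= Rr ->
     filterlim (fun y => (U y - U x) / (y - x))
       (within (fun y => 0 <= y <= Rr /\ y <> x) (locally x)) (locally (Up x))) /\
  (forall x, 0 <= x <= Rr ->
     filterlim Up (within (fun y => 0 <= y <= Rr) (locally x)) (locally (Up x))).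

Definition smooth_on_open (U : R -> R) (Rr : R) : Prop :=
  forall (n : nat) (x : R), 0 < x < Rr -> ex_derive_n U n x.

Definition Ip (N : nat) (Rr p : R) (U : R -> R) : R :=
  RInt (fun s => s ^ (N - 1)%nat * exp (p * U s)) 0 Rr.
Definition Iq (N : nat) (Rr q : R) (U : R -> R) : R :=
  RInt (fun s => s ^ (N - 1)%nat * exp (- q * U s)) 0 Rr.

Definition solves_Nstar (N : nat) (Rr : R) (g : R -> R) (A B p q eps : R)
    (U Up : R -> R) : Prop :=
  C1_closed_with_deriv U Up Rr /\
  smooth_on_open U Rr /\
  (forall r, 0 < r < Rr ->
     eps ^ 2 * g r * (Derive_n U 2 r + ((INR N - 1) / r + Derive g r / g r) * Derive U r)
     = Rr ^ N / INR N *
       (A * exp (p * U r) / Ip N Rr p U - B * exp (- q * U r) / Iq N Rr q U)) /\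
  RInt (fun s => s ^ (N - 1)%nat * U s) 0 Rr = 0 /\
  Up 0 = 0 /\
  Up Rr = Rr * (A - B) / (eps ^ 2 * INR N * g Rr).

Definition Lambda1 (N : nat) (Rr : R) (g : R -> R) (eps : R) (Up : R -> R) : R :=
  eps ^ 2 / 2 *
  RInt (fun s => ((INR N - 2) * g s + s * Derive g s) / Rr ^ N * s ^ (N - 1)%nat * Up s ^ 2)
    0 Rr.

(* Lambda_2 with the lower point t = eps^kappa *)
Definition Lambda2 (N : nat) (Rr : R) (g : R -> R) (eps t : R) (Up : R -> R) : R :=
  - (eps ^ 2 / 2) * g t * Up t ^ 2 +
  eps ^ 2 / 2 * RInt (fun s => (2 * (INR N - 1) * g s + s * Derive g s) / s * Up s ^ 2) t Rr.

(* Main.v *)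
Require Import Defs.
From Stdlib Require Import Reals Lra Lia.
From Coquelicot Require Import Coquelicot.
Open Scope R_scope.


Lemma ball_R (x e y : R) : ball x e y <-> Rabs (y - x) < e.
Proof. split; intro H; exact H. Qed.

Definition clamp (a b z : R) := Rmax a (Rmin b z).

Lemma clamp_lip a b x y : a <= b -> Rabs (clamp a b y - clamp a b x) <= Rabs (y - x).
Proof.
  intros hab; unfold clamp, Rmax, Rmin.
  repeat destruct Rle_dec; unfold Rabs; repeat destruct Rcase_abs; lra.
Qed.

Lemma clamp_in a b z : a <= b -> a <= clamp a b z <= b.
Proof. intros; unfold clamp, Rmax, Rmin; repeat destruct Rle_dec; lra. Qed.

Lemma clamp_id a b z : a <= z <= b -> clamp a b z = z.
Proof. intros; unfold clamp, Rmax, Rmin; repeat destruct Rle_dec; lra. Qed.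

Lemma cont_clamp a b (f : R -> R) : a <= b ->
  (forall x, a <= x <= b -> filterlim f (within (fun y => a <= y <= b) (locally x)) (locally (f x))) ->
  forall z, continuous (fun z => f (clamp a b z)) z.
Proof.
  intros hab H z.
  unfold continuous.
  eapply filterlim_comp; [| apply (H _ (clamp_in a b z hab))].
  intros P [e He]. exists e. intros y Hy. apply He.
  - apply ball_R. apply ball_R in Hy. eapply Rle_lt_trans; [apply clamp_lip; exact hab|exact Hy].
  - apply clamp_in; exact hab.
Qed.

Lemma within_of_cont (D : R -> Prop) (f : R -> R) x : continuous f x ->
  filterlim f (within D (locally x)) (locally (f x)).
Proof.
  intros H. eapply filterlim_filter_le_1; [| exact H].
  intros P [e He]. exists e. intros y Hy _. apply He; exact Hy.
Qed.

Lemma locally_open a b x : a < x < b -> locally x (fun y => a < y < b).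
Proof.
  intros Hx.
  assert (hp : 0 < Rmin (x - a) (b - x)) by (apply Rmin_glb_lt; lra).
  exists (mkposreal _ hp). intros y Hy. apply ball_R in Hy. change (Rabs (y - x) < Rmin (x - a) (b - x)) in Hy.
  pose proof (Rmin_l (x - a) (b - x)); pose proof (Rmin_r (x - a) (b - x)); destruct (Rabs_def2 _ _ Hy); lra.
Qed.

Lemma cont_of_quot a b (f : R -> R) x l : a <= x <= b ->
  filterlim (fun y => (f y - f x) / (y - x))
       (within (fun y => a <= y <= b /\ y <> x) (locally x)) (locally l) ->
  filterlim f (within (fun y => a <= y <= b) (locally x)) (locally (f x)).
Proof.
  intros Hx H.
  apply filterlim_locally. intros eps.
  assert (H1 := proj1 (filterlim_locally _ _) H (mkposreal 1 Rlt_0_1)).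
  destruct H1 as [d Hd].
  assert (hp : 0 < Rmin d (eps / (Rabs l + 1))).
  { apply Rmin_glb_lt. apply cond_pos. apply Rdiv_lt_0_compat. apply cond_pos.
    pose proof (Rabs_pos l); lra. }
  exists (mkposreal _ hp). intros y Hy HS. apply ball_R. apply ball_R in Hy. change (Rabs (y - x) < Rmin d (eps / (Rabs l + 1))) in Hy.
  destruct (Req_dec y x) as [->|Hne]. { unfold Rminus; rewrite Rplus_opp_r, Rabs_R0. apply cond_pos. }
  assert (Hyd : ball x d y). { apply ball_R. eapply Rlt_le_trans; [exact Hy| apply Rmin_l]. }
  specialize (Hd y Hyd (conj HS Hne)). apply ball_R in Hd. change (Rabs ((f y - f x) / (y - x) - l) < 1) in Hd.
  assert (Hy2 : Rabs (y - x) < eps / (Rabs l + 1)) by (eapply Rlt_le_trans; [exact Hy| apply Rmin_r]).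
  assert (hyx : y - x <> 0) by lra.
  replace (f y - f x) with ((f y - f x) / (y - x) * (y - x)) by (field; exact hyx).
  rewrite Rabs_mult.
  assert (Hq : Rabs ((f y - f x) / (y - x)) <= Rabs l + 1).
  { pose proof (Rabs_triang_inv ((f y - f x) / (y - x)) l). lra. }
  pose proof (Rabs_pos l). pose proof (Rabs_pos (y - x)).
  apply Rle_lt_trans with ((Rabs l + 1) * Rabs (y - x)).
  - apply Rmult_le_compat_r; lra.
  - apply Rmult_lt_reg_r with (/ (Rabs l + 1)). apply Rinv_0_lt_compat; lra.
    replace ((Rabs l + 1) * Rabs (y - x) * / (Rabs l + 1)) with (Rabs (y - x)) by (field; lra).
    exact Hy2.
Qed.

Lemma deriv_of_quot a b (f : R -> R) x l : a < x < b ->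
  filterlim (fun y => (f y - f x) / (y - x))
       (within (fun y => a <= y <= b /\ y <> x) (locally x)) (locally l) ->
  is_derive f x l.
Proof.
  intros Hx H. apply is_derive_Reals. intros eps Heps.
  destruct (proj1 (filterlim_locally _ _) H (mkposreal eps Heps)) as [d Hd].
  destruct (locally_open a b x Hx) as [d2 Hd2].
  assert (hp : 0 < Rmin d d2) by (apply Rmin_glb_lt; apply cond_pos).
  exists (mkposreal _ hp). intros h hne hh. change (Rabs h < Rmin d d2) in hh.
  assert (Hb1 : ball x d (x + h)). { apply ball_R. replace (x + h - x) with h by ring.
    eapply Rlt_le_trans; [exact hh|apply Rmin_l]. }
  assert (Hb2 : ball x d2 (x + h)). { apply ball_R. replace (x + h - x) with h by ring.
    eapply Rlt_le_trans; [exact hh|apply Rmin_r]. }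
  specialize (Hd2 _ Hb2). assert (hne2 : x + h <> x) by (intro; apply hne; lra).
  assert (Hq := Hd (x + h) Hb1 (conj (conj (Rlt_le _ _ (proj1 Hd2)) (Rlt_le _ _ (proj2 Hd2))) hne2)).
  apply ball_R in Hq. replace (x + h - x) with h in Hq by ring. exact Hq.
Qed.

Lemma cM (f g : R -> R) z : continuous f z -> continuous g z -> continuous (fun z => f z * g z) z.
Proof. intros H1 H2. exact (@continuous_mult R_UniformSpace R_AbsRing f g z H1 H2). Qed.
Lemma cP (f g : R -> R) z : continuous f z -> continuous g z -> continuous (fun z => f z + g z) z.
Proof. intros H1 H2. exact (@continuous_plus R_UniformSpace R_AbsRing R_NormedModule f g z H1 H2). Qed.
Lemma cE (f : R -> R) z : continuous f z -> continuous (fun z => exp (f z)) z.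
Proof. intros H. apply (@continuous_comp R_UniformSpace R_UniformSpace R_UniformSpace f exp z H).
  apply (@ex_derive_continuous R_AbsRing R_NormedModule). auto_derive. auto. Qed.
Lemma cPow (f : R -> R) n z : continuous f z -> continuous (fun z => f z ^ n) z.
Proof. intros H. apply (@continuous_comp R_UniformSpace R_UniformSpace R_UniformSpace f (fun y => y ^ n) z H).
  apply (@ex_derive_continuous R_AbsRing R_NormedModule). auto_derive. auto. Qed.
Lemma cInv (f : R -> R) z : continuous f z -> f z <> 0 -> continuous (fun z => / f z) z.
Proof. intros H H0. apply (@continuous_comp R_UniformSpace R_UniformSpace R_UniformSpace f Rinv z H).
  apply (@ex_derive_continuous R_AbsRing R_NormedModule). auto_derive. auto. Qed.
Lemma cC (c : R) z : continuous (fun _ : R => c) z.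
Proof. apply continuous_const. Qed.
Lemma cI z : continuous (fun y : R => y) z.
Proof. apply continuous_id. Qed.
Lemma cO (f : R -> R) z : continuous f z -> continuous (fun z => - f z) z.
Proof. intros H. exact (@continuous_opp R_UniformSpace R_AbsRing R_NormedModule f z H). Qed.

Lemma cMin (f g : R -> R) z : continuous f z -> continuous g z -> continuous (fun z => f z - g z) z.
Proof. intros H1 H2. apply cP; [exact H1|]. apply cO. exact H2. Qed.
Lemma cRInt (h : R -> R) a : (forall z, continuous h z) -> forall z, continuous (fun x => RInt h a x) z.
Proof. intros H z. apply (@ex_derive_continuous R_AbsRing R_NormedModule).
  exists (h z). apply (is_derive_RInt h (fun x => RInt h a x) a z).
  - apply filter_forall. intros b. apply (@RInt_correct R_CompleteNormedModule).
    apply (@ex_RInt_continuous R_CompleteNormedModule). intros; apply H.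
  - apply H. Qed.
Lemma cInv' (f : R -> R) z : continuous f z -> f z <> 0 -> continuous (fun z => / f z) z.
Proof. apply cInv. Qed.

Ltac cont_tac := repeat match goal with
  | |- continuous (fun z => _ * _) _ => apply cM
  | |- continuous (fun z => _ + _) _ => apply cP
  | |- continuous (fun z => _ - _) _ => apply cMin
  | |- continuous (fun z => RInt _ _ z) _ => apply cRInt
  | |- continuous (RInt _ _) _ => apply cRInt
  | |- continuous (fun z => / _) _ => apply cInv'
  | |- continuous (fun z => exp _) _ => apply cE
  | |- continuous (fun z => _ ^ _) _ => apply cPow
  | |- continuous (fun z => - _) _ => apply cO
  | |- continuous (fun z => ?c) _ => apply cC
  | |- continuous (fun z => z) _ => apply cI
  | H : forall z, continuous ?f z |- continuous ?f _ => apply H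
  | H : forall z, continuous ?f z |- forall z, continuous ?f z => exact H
  end.

Ltac nz := repeat split; try apply pow_nonzero; lra.

Lemma exRInt (h : R -> R) a b : (forall z, continuous h z) -> ex_RInt h a b.
Proof. intros H. apply (@ex_RInt_continuous R_CompleteNormedModule). intros; apply H. Qed.
Theorem lemma3p6 (N : nat) (Rr : R) (g : R -> R) (A B p q kappa eps : R)
  (U Up : R -> R) :
  (2 <= N)%nat -> 0 < Rr ->
  smooth_on_closed g Rr -> (forall x, 0 <= x <= Rr -> 0 < g x) ->
  0 < A -> 0 < B -> 0 < p -> 0 < q -> A <> B ->
  0 < kappa < 1 -> 0 < eps ->
  Rpower eps kappa <= Rr ->
  solves_Nstar N Rr g A B p q eps U Up ->
  Rr ^ N / INR N *
    (A * exp (p * U Rr) / (p * Ip N Rr p U) + B * exp (- q * U Rr) / (q * Iq N Rr q U))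
  = Rr ^ 2 * (A - B) ^ 2 / (2 * INR N ^ 2 * eps ^ 2 * g Rr) + A / p + B / q
    + Lambda1 N Rr g eps Up
  /\
  Rr ^ N / INR N *
    (A * exp (p * U (Rpower eps kappa)) / (p * Ip N Rr p U)
     + B * exp (- q * U (Rpower eps kappa)) / (q * Iq N Rr q U))
  = A / p + B / q + Lambda1 N Rr g eps Up - Lambda2 N Rr g eps (Rpower eps kappa) Up.
Proof.
  intros HN HR Hg gpos HA HB Hp Hq HAB Hk He Ht Hsol.
  destruct Hsol as [[Hquot Hupc] [Hsm [Hode [_ [_ HupR]]]]].
  destruct Hg as [dl [hdl hg]].
  assert (tpos : 0 < Rpower eps kappa) by (unfold Rpower; apply exp_pos).
  set (t := Rpower eps kappa) in *.
  clearbody t.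
  assert (hUcw : forall x, 0 <= x <= Rr -> filterlim U (within (fun y => 0 <= y <= Rr) (locally x)) (locally (U x))).
  { intros x Hx. eapply cont_of_quot; [exact Hx| apply Hquot; exact Hx]. }
  assert (hUd : forall x, 0 < x < Rr -> is_derive U x (Up x)).
  { intros x Hx. eapply deriv_of_quot; [exact Hx| apply Hquot; lra]. }
  assert (hDU : forall x, 0 < x < Rr -> Derive U x = Up x).
  { intros x Hx. apply is_derive_unique. apply hUd; exact Hx. }
  assert (hUpd : forall x, 0 < x < Rr -> is_derive Up x (Derive_n U 2 x)).
  { intros x Hx. apply is_derive_ext_loc with (f := Derive U).
    - generalize (locally_open 0 Rr x Hx). apply filter_imp. intros y Hy. apply hDU; exact Hy.
    - apply Derive_correct. exact (Hsm 2%nat x Hx). }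
  assert (hgd : forall x, 0 <= x <= Rr -> ex_derive g x).
  { intros x Hx. exact (hg 1%nat x ltac:(lra)). }
  assert (hgd2 : forall x, 0 <= x <= Rr -> ex_derive (Derive g) x).
  { intros x Hx. exact (hg 2%nat x ltac:(lra)). }
  set (c := clamp 0 Rr).
  assert (hc : forall z, 0 <= z <= Rr -> c z = z) by (intros; apply clamp_id; auto).
  assert (hcin : forall z, 0 <= c z <= Rr) by (intros; apply clamp_in; lra).
  assert (cU : forall z, continuous (fun z => U (c z)) z) by (apply cont_clamp; [lra| exact hUcw]).
  assert (cUp : forall z, continuous (fun z => Up (c z)) z) by (apply cont_clamp; [lra| exact Hupc]).
  assert (cg : forall z, continuous (fun z => g (c z)) z).
  { apply cont_clamp; [lra|]. intros x Hx. apply within_of_cont.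
    apply (@ex_derive_continuous R_AbsRing R_NormedModule). apply hgd; exact Hx. }
  assert (cdg : forall z, continuous (fun z => Derive g (c z)) z).
  { apply cont_clamp; [lra|]. intros x Hx. apply within_of_cont.
    apply (@ex_derive_continuous R_AbsRing R_NormedModule). apply hgd2; exact Hx. }
  assert (HN1 : (1 <= N)%nat) by lia.
  assert (INRpos : 0 < INR N) by (apply lt_0_INR; lia).
  assert (hIp : 0 < Ip N Rr p U).
  { unfold Ip. rewrite (RInt_ext _ (fun s => s ^ (N - 1) * exp (p * U (c s)))).
    - apply RInt_gt_0; [lra| |].
      + intros x Hx. apply Rmult_lt_0_compat; [apply pow_lt; lra| apply exp_pos].
      + intros x _. cont_tac.
    - intros y Hy. rewrite Rmin_left, Rmax_right in Hy by lra. rewrite hc by lra. reflexivity. }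
  assert (hIq : 0 < Iq N Rr q U).
  { unfold Iq. rewrite (RInt_ext _ (fun s => s ^ (N - 1) * exp (- q * U (c s)))).
    - apply RInt_gt_0; [lra| |].
      + intros x Hx. apply Rmult_lt_0_compat; [apply pow_lt; lra| apply exp_pos].
      + intros x _. cont_tac.
    - intros y Hy. rewrite Rmin_left, Rmax_right in Hy by lra. rewrite hc by lra. reflexivity. }
  set (cA := A / (p * Ip N Rr p U)). set (cB := B / (q * Iq N Rr q U)).
  pose (h1 := fun s => ((INR N - 2) * g (c s) + s * Derive g (c s)) * s ^ (N - 1) * Up (c s) ^ 2).
  pose (h2 := fun s => s ^ (N - 1) * (cA * exp (p * U (c s)) + cB * exp (- q * U (c s)))).
  assert (ch1 : forall z, continuous h1 z) by (intro z; unfold h1; cont_tac).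
  assert (ch2 : forall z, continuous h2 z) by (intro z; unfold h2; cont_tac).
  pose (Phi := fun x => Rr ^ N / INR N * (x ^ N * (cA * exp (p * U (c x)) + cB * exp (- q * U (c x))))
     - eps ^ 2 / 2 * (x ^ N * g (c x) * Up (c x) ^ 2) - eps ^ 2 / 2 * RInt h1 0 x - Rr ^ N * RInt h2 0 x).
  assert (dPhi : forall x, 0 < x < Rr -> is_derive Phi x 0).
  { intros x Hx.
    apply is_derive_ext_loc with (f := fun y => Rr ^ N / INR N * (y ^ N * (cA * exp (p * U y) + cB * exp (- q * U y)))
     - eps ^ 2 / 2 * (y ^ N * g y * Up y ^ 2) - eps ^ 2 / 2 * RInt h1 0 y - Rr ^ N * RInt h2 0 y).
    { generalize (locally_open 0 Rr x Hx). apply filter_imp. intros y Hy. unfold Phi.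
      rewrite hc by lra. reflexivity. }
    auto_derive.
    - repeat split.
      + exists (Up x); apply hUd; exact Hx.
      + exists (Up x); apply hUd; exact Hx.
      + apply hgd; lra.
      + exists (Derive_n U 2 x); apply hUpd; exact Hx.
      + apply exRInt; exact ch1.
      + apply filter_forall; intros; apply continuity_pt_filterlim; apply ch1.
      + apply exRInt; exact ch2.
      + apply filter_forall; intros; apply continuity_pt_filterlim; apply ch2.
    - replace (Derive (fun x0 => U x0) x) with (Up x) by (symmetry; apply hDU; exact Hx).
      replace (Derive (fun x0 => Up x0) x) with (Derive_n U 2 x) by (symmetry; apply is_derive_unique; apply hUpd; exact Hx).
      unfold h1, h2. rewrite hc by lra.
      assert (Ho := Hode x Hx). rewrite hDU in Ho by exact Hx.
      assert (gx : 0 < g x) by (apply gpos; lra).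
      assert (HU2 : Derive_n U 2 x = (Rr ^ N / INR N * (A * exp (p * U x) / Ip N Rr p U - B * exp (- q * U x) / Iq N Rr q U)) / (eps ^ 2 * g x) - ((INR N - 1) / x + Derive g x / g x) * Up x).
      { rewrite <- Ho. field. nz. }
      rewrite HU2. unfold cA, cB.
      destruct N as [|m]; [lia|].
      replace (pred (S m)) with m by reflexivity. replace (S m - 1)%nat with m by lia.
      change (x ^ S m) with (x * x ^ m).
      change (Derive (fun x0 => g x0) x) with (Derive g x). match goal with |- ?a = _ => change (@eq R a 0) end. field. nz. }
  assert (cPhi : forall z, continuity_pt Phi z).
  { intros z. apply continuity_pt_filterlim. change (continuous Phi z). unfold Phi. cont_tac. }
  assert (Phi0 : Phi 0 = 0).
  { unfold Phi. rewrite !RInt_point. rewrite pow_i by lia. change (@zero R_CompleteNormedModule) with 0. ring. }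
  assert (PhiR : Phi Rr = 0).
  { destruct (MVT_gen Phi 0 Rr (fun _ => 0)) as [c0 [_ Hc0]].
    - rewrite Rmin_left, Rmax_right by lra. exact dPhi.
    - intros; apply cPhi.
    - lra. }
  assert (I2v : RInt h2 0 Rr = A / p + B / q).
  { rewrite (RInt_ext h2 (fun s => plus (scal cA (s ^ (N - 1) * exp (p * U (c s)))) (scal cB (s ^ (N - 1) * exp (- q * U (c s)))))).
    - rewrite (@RInt_plus R_CompleteNormedModule), !(@RInt_scal R_CompleteNormedModule).
      + rewrite (RInt_ext (fun s => s ^ (N - 1) * exp (p * U (c s))) (fun s => s ^ (N - 1) * exp (p * U s))).
        rewrite (RInt_ext (fun s => s ^ (N - 1) * exp (- q * U (c s))) (fun s => s ^ (N - 1) * exp (- q * U s))).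
        * fold (Ip N Rr p U). fold (Iq N Rr q U). unfold cA, cB. unfold plus, scal; simpl. unfold mult; simpl. field. nz.
        * intros y Hy. rewrite Rmin_left, Rmax_right in Hy by lra. rewrite hc by lra. reflexivity.
        * intros y Hy. rewrite Rmin_left, Rmax_right in Hy by lra. rewrite hc by lra. reflexivity.
      + apply exRInt. intro z. cont_tac.
      + apply exRInt. intro z. cont_tac.
      + apply (@ex_RInt_scal R_CompleteNormedModule). apply exRInt. intro z. cont_tac.
      + apply (@ex_RInt_scal R_CompleteNormedModule). apply exRInt. intro z. cont_tac.
    - intros y Hy. unfold h2, plus, scal; simpl. unfold mult; simpl. ring. }
  assert (L1v : Lambda1 N Rr g eps Up = eps ^ 2 / 2 * (/ Rr ^ N * RInt h1 0 Rr)).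
  { unfold Lambda1. f_equal.
    rewrite (RInt_ext _ (fun s => scal (/ Rr ^ N) (h1 s))).
    - rewrite (@RInt_scal R_CompleteNormedModule). reflexivity. apply exRInt; exact ch1.
    - intros y Hy. rewrite Rmin_left, Rmax_right in Hy by lra. unfold h1, scal; simpl. unfold mult; simpl.
      rewrite hc by lra. field. nz. }
  assert (G1 : Rr ^ N / INR N *
    (A * exp (p * U Rr) / (p * Ip N Rr p U) + B * exp (- q * U Rr) / (q * Iq N Rr q U))
    = Rr ^ 2 * (A - B) ^ 2 / (2 * INR N ^ 2 * eps ^ 2 * g Rr) + A / p + B / q
    + Lambda1 N Rr g eps Up).
  { unfold Phi in PhiR. rewrite hc in PhiR by lra. rewrite I2v in PhiR. rewrite L1v.
    assert (gR : 0 < g Rr) by (apply gpos; lra).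
    set (I1 := RInt h1 0 Rr) in *.
    set (FR := cA * exp (p * U Rr) + cB * exp (- q * U Rr)) in *.
    assert (HI1 : I1 = 2 / eps ^ 2 * (Rr ^ N / INR N * (Rr ^ N * FR) - eps ^ 2 / 2 * (Rr ^ N * g Rr * Up Rr ^ 2) - Rr ^ N * (A / p + B / q))).
    { assert (eps ^ 2 / 2 * (2 / eps ^ 2 * (Rr ^ N / INR N * (Rr ^ N * FR) - eps ^ 2 / 2 * (Rr ^ N * g Rr * Up Rr ^ 2) - Rr ^ N * (A / p + B / q))) = (Rr ^ N / INR N * (Rr ^ N * FR) - eps ^ 2 / 2 * (Rr ^ N * g Rr * Up Rr ^ 2) - Rr ^ N * (A / p + B / q))) by (field; nz).
      apply Rmult_eq_reg_l with (eps ^ 2 / 2). lra. apply Rgt_not_eq. apply Rdiv_lt_0_compat; [apply pow_lt; lra|lra]. }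
    rewrite HI1. unfold FR, cA, cB. rewrite HupR. field. nz. }
  split; [exact G1|].
  assert (cct : forall z, continuous (fun z => clamp t Rr z) z).
  { apply (cont_clamp t Rr (fun y => y)); [lra|]. intros x Hx. apply within_of_cont. apply cI. }
  assert (ctin : forall z, t <= clamp t Rr z <= Rr) by (intros; apply clamp_in; lra).
  pose (h3 := fun s => (2 * (INR N - 1) * g (c s) + s * Derive g (c s)) * / clamp t Rr s * Up (c s) ^ 2).
  assert (ch3 : forall z, continuous h3 z).
  { intro z. unfold h3. cont_tac. specialize (ctin z). lra. }
  pose (Psi := fun x => Rr ^ N / INR N * (cA * exp (p * U (c x)) + cB * exp (- q * U (c x)))
     - eps ^ 2 / 2 * (g (c x) * Up (c x) ^ 2) - eps ^ 2 / 2 * RInt h3 t x).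
  assert (dPsi : forall x, t < x < Rr -> is_derive Psi x 0).
  { intros x Hx0. assert (Hx : 0 < x < Rr) by lra.
    apply is_derive_ext_loc with (f := fun y => Rr ^ N / INR N * (cA * exp (p * U y) + cB * exp (- q * U y))
     - eps ^ 2 / 2 * (g y * Up y ^ 2) - eps ^ 2 / 2 * RInt h3 t y).
    { generalize (locally_open 0 Rr x Hx). apply filter_imp. intros y Hy. unfold Psi.
      rewrite hc by lra. reflexivity. }
    auto_derive.
    - repeat split.
      + exists (Up x); apply hUd; exact Hx.
      + exists (Up x); apply hUd; exact Hx.
      + apply hgd; lra.
      + exists (Derive_n U 2 x); apply hUpd; exact Hx.
      + apply exRInt; exact ch3.
      + apply filter_forall; intros; apply continuity_pt_filterlim; apply ch3.
    - replace (Derive (fun x0 => U x0) x) with (Up x) by (symmetry; apply hDU; exact Hx).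
      replace (Derive (fun x0 => Up x0) x) with (Derive_n U 2 x) by (symmetry; apply is_derive_unique; apply hUpd; exact Hx).
      unfold h3. rewrite hc by lra. rewrite (clamp_id t Rr x) by lra.
      assert (Ho := Hode x Hx). rewrite hDU in Ho by exact Hx.
      assert (gx : 0 < g x) by (apply gpos; lra).
      assert (HU2 : Derive_n U 2 x = (Rr ^ N / INR N * (A * exp (p * U x) / Ip N Rr p U - B * exp (- q * U x) / Iq N Rr q U)) / (eps ^ 2 * g x) - ((INR N - 1) / x + Derive g x / g x) * Up x).
      { rewrite <- Ho. field. nz. }
      rewrite HU2. unfold cA, cB.
      change (Derive (fun x0 => g x0) x) with (Derive g x). match goal with |- ?a = _ => change (@eq R a 0) end. field. nz. }
  assert (PsiE : Psi Rr = Psi t).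
  { destruct (MVT_gen Psi t Rr (fun _ => 0)) as [c0 [_ Hc0]].
    - rewrite Rmin_left, Rmax_right by lra. exact dPsi.
    - intros; apply continuity_pt_filterlim. change (continuous Psi x). unfold Psi. cont_tac.
    - lra. }
  assert (I3v : RInt (fun s => (2 * (INR N - 1) * g s + s * Derive g s) / s * Up s ^ 2) t Rr = RInt h3 t Rr).
  { apply RInt_ext. intros y Hy. rewrite Rmin_left, Rmax_right in Hy by lra. unfold h3.
    rewrite hc by lra. rewrite (clamp_id t Rr y) by lra. reflexivity. }
  unfold Lambda2. rewrite I3v.
  unfold Psi in PsiE. rewrite !hc in PsiE by lra. rewrite RInt_point in PsiE.
  change (@zero R_CompleteNormedModule) with 0 in PsiE.
  assert (gR : 0 < g Rr) by (apply gpos; lra).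
  assert (K : eps ^ 2 / 2 * (g Rr * Up Rr ^ 2) = Rr ^ 2 * (A - B) ^ 2 / (2 * INR N ^ 2 * eps ^ 2 * g Rr)).
  { rewrite HupR. field. nz. }
  assert (F1 : Rr ^ N / INR N * (cA * exp (p * U Rr) + cB * exp (- q * U Rr)) = Rr ^ N / INR N *
    (A * exp (p * U Rr) / (p * Ip N Rr p U) + B * exp (- q * U Rr) / (q * Iq N Rr q U))).
  { unfold cA, cB. field. nz. }
  assert (F2 : Rr ^ N / INR N * (cA * exp (p * U t) + cB * exp (- q * U t)) = Rr ^ N / INR N *
    (A * exp (p * U t) / (p * Ip N Rr p U) + B * exp (- q * U t) / (q * Iq N Rr q U))).
  { unfold cA, cB. field. nz. }
  lra.
Qed.
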